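(* Let $G$ be a compact, totally disconnected group and $\alpha$ an automorphism of $G$ such that $(G,\alpha)$ is topologically transitive, and let $N\le G$ be a finite, normal, $\alpha$-stable subgroup. Then $N$ is contained in the centre of $G$.
   Context: $(G,\alpha)$ is topologically transitive if some orbit $\{\alpha^n(x):n\in\mathbb{Z}\}$ is dense in $G$. A subgroup $N$ is $\alpha$-stable if $\alpha(N)=N$. *)

(* Defs.v *)
From HB Require Import structures.
From mathcomp Require Import all_boot all_algebra.
From mathcomp Require Import all_classical all_reals topology.
Set Implicit Arguments. Unset Strict Implicit. Unset Printing Implicit Defensive.
Local Open Scope classical_set_scope.

Definition is_topological_group (T : topologicalType)
  (mul : T -> T -> T) (inv : T -> T) (e : T) : Prop :=
  [/\ (forall x y z, mul x (mul y z) = mul (mul x y) z),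
      (forall x, mul e x = x /\ mul x e = x),
      (forall x, mul (inv x) x = e /\ mul x (inv x) = e),
      continuous (fun p : T * T => mul p.1 p.2)
    & continuous inv].

Definition is_topological_automorphism (T : topologicalType)
  (mul : T -> T -> T) (alpha beta : T -> T) : Prop :=
  [/\ (forall x y, alpha (mul x y) = mul (alpha x) (alpha y)),
      cancel alpha beta, cancel beta alpha,
      continuous alpha & continuous beta].

Definition iterz (T : Type) (alpha beta : T -> T) (n : int) : T -> T :=
  match n with
  | Posz k => iter k alpha
  | Negz k => iter k.+1 beta
  end.

Definition orbitZ (T : Type) (alpha beta : T -> T) (x : T) : set T :=
  [set y | exists n : int, y = iterz alpha beta n x].

Definition topologically_transitive (T : topologicalType) (alpha beta : T -> T)
  : Prop := exists x : T, dense (orbitZ alpha beta x).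

Definition is_subgroup (T : Type) (mul : T -> T -> T) (inv : T -> T) (e : T)
  (N : set T) : Prop :=
  [/\ N e, (forall x y, N x -> N y -> N (mul x y)) & (forall x, N x -> N (inv x))].

Definition is_normal (T : Type) (mul : T -> T -> T) (inv : T -> T) (N : set T)
  : Prop := forall g x, N x -> N (mul (mul g x) (inv g)).

Definition centre (T : Type) (mul : T -> T -> T) : set T :=
  [set z | forall g, mul z g = mul g z].

(* Main.v *)
Require Import Defs.
From HB Require Import structures.
From mathcomp Require Import all_boot all_algebra.
From mathcomp Require Import all_classical all_reals topology.
Local Open Scope classical_set_scope.

Section Aux.
Variable T : topologicalType.

Lemma near_neq (U : topologicalType) (Hh : hausdorff_space U) (f1 f2 : T -> U) (g : T) :
  {for g, continuous f1} -> {for g, continuous f2} -> f1 g <> f2 g ->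
  \forall h \near g, f1 h <> f2 h.
Proof.
move=> c1 c2 neq.
have : ~ cluster (nbhs (f1 g)) (f2 g) by move=> /Hh.
move=> /existsNP[A /existsNP[B /not_implyP[nA /not_implyP[nB /set0P/negP/negbNE/eqP AB]]]].
near=> h => E.
have hA : A (f1 h) by near: h; exact: c1.
have hB : B (f2 h) by near: h; exact: c2.
have : (A `&` B) (f1 h) by split => //; rewrite E.
by rewrite AB.
Unshelve. all: by end_near. Qed.

Lemma near_all_seq (g : T) (U : eqType) (s : seq U) (Q : U -> T -> Prop) :
  (forall a, a \in s -> \forall h \near g, Q a h) ->
  \forall h \near g, forall a, a \in s -> Q a h.
Proof.
elim: s => [|a s IH] H.
  by apply: nearW => x a; rewrite in_nil.
have H1 := H a (mem_head _ _).
have H2 : \forall h \near g, forall b, b \in s -> Q b h.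
  by apply: IH => b bs; apply: H; rewrite in_cons bs orbT.
near=> h => b; rewrite in_cons => /orP[/eqP->|bs].
  by near: h.
by move: b bs; near: h.
Unshelve. all: by end_near. Qed.

Lemma cont_mul (mul : T -> T -> T) (cm : continuous (fun p : T * T => mul p.1 p.2))
  (f1 f2 : T -> T) : continuous f1 -> continuous f2 -> continuous (fun h => mul (f1 h) (f2 h)).
Proof.
move=> c1 c2 x.
apply: (@continuous2_cvg _ _ _ _ _ _ f1 f2 mul) => //.
exact: (cm (f1 x, f2 x)).
exact: c1. exact: c2.
Qed.
End Aux.

Theorem corollary5p13 (T : topologicalType)
  (mul : T -> T -> T) (inv : T -> T) (e : T)
  (HG : is_topological_group mul inv e)
  (Hhaus : hausdorff_space T)
  (Hcpt : compact [set: T])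
  (Htd : totally_disconnected [set: T])
  (alpha beta : T -> T)
  (Halpha : is_topological_automorphism mul alpha beta)
  (Htrans : topologically_transitive alpha beta)
  (N : set T)
  (HNfin : finite_set N)
  (HNsub : is_subgroup mul inv e N)
  (HNnorm : is_normal mul inv N)
  (HNstable : alpha @` N = N) :
  N `<=` centre mul.
Proof.
case: HG => assoc unit invl cm cinv.
case: Halpha => hom ab ba ca cb.
have /finite_seqP [s Ns] := HNfin.
pose K g := forall m, N m -> mul g m = mul m g.
have cid : continuous (@id T) by move=> x.
have ccst : forall c : T, continuous (fun _ : T => c) by move=> c; exact: cst_continuous.
have Kopen : forall g, K g -> \forall h \near g, K h.
  move=> g Kg.
  have : \forall h \near g, forall m, m \in s -> mul h m = mul m h.
    apply: near_all_seq => m ms.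
    have Nm : N m by rewrite Ns.
    pose c h := mul (mul h m) (inv h).
    have cc : continuous c.
      by apply: (@cont_mul T mul cm) => //; apply: (@cont_mul T mul cm).
    have cg : c g = m.
      by rewrite /c Kg // -assoc (proj2 (invl g)) (proj2 (unit m)).
    have : \forall h \near g, forall m', m' \in s -> m' <> m -> c h <> m'.
      apply: near_all_seq => m' m's; have [->|neq] := eqVneq m' m.
        by apply: nearW.
      have cgm : c g <> m' by rewrite cg; apply/eqP; rewrite eq_sym.
      move: (@near_neq T T Hhaus _ _ _ (cc g) (ccst m' g) cgm).
      by apply: filterS => h H _.
    apply: filterS => h H.
    have Nch : N (c h) by apply: HNnorm.
    have chm : c h = m.
      apply: contrapT => ne.
      by apply: (H (c h)) => //; move: Nch; rewrite Ns.
    have : mul (c h) h = mul h m.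
      by rewrite /c -assoc (proj1 (invl h)) (proj2 (unit _)).
    by rewrite chm => ->.
  by apply: filterS => h H m; rewrite Ns => /H.
have Kclosed : forall g, ~ K g -> \forall h \near g, ~ K h.
  move=> g /existsNP [m /not_implyP [Nm neq]].
  move: (@near_neq T T Hhaus _ _ _ (@cont_mul T mul cm _ _ cid (ccst m) g) (@cont_mul T mul cm _ _ (ccst m) cid g) neq).
  by apply: filterS => h H Kh; apply: H; apply: Kh.
have Ka : forall g, K g -> K (alpha g).
  move=> g Kg m Nm.
  have : N m by [].
  rewrite -HNstable => -[m0 Nm0 <-].
  by rewrite -!hom Kg.
have Kb : forall g, K g -> K (beta g).
  move=> g Kg m Nm.
  apply: (can_inj ab).
  have Nam : N (alpha m) by rewrite -HNstable; exists m.
  by rewrite !hom ba Kg.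
have Ka' : forall g, K (alpha g) -> K g.
  by move=> g /Kb; rewrite ab.
have Kb' : forall g, K (beta g) -> K g.
  by move=> g /Ka; rewrite ba.
have Kit : forall n y, K y -> K (iterz alpha beta n y).
  case=> n y Ky /=; elim: n => [|n IH] //=; by [apply: Ka|apply: Kb].
have Kit' : forall n y, K (iterz alpha beta n y) -> K y.
  case=> n y /=; [elim: n => [|n IH] //= /Ka' /IH //|elim: n => [|n IH] /= /Kb' //].
have oK : open K by rewrite openE => g /Kopen.
have oKC : open (~` K) by rewrite openE => g /Kclosed.
case: Htrans => x dx.
have Ke : K e by move=> m _; rewrite (proj1 (unit m)) (proj2 (unit m)).
have [y [Ky [n Hy]]] := dx K (ex_intro _ e Ke) oK.
have Kx : K x by apply: (Kit' n); rewrite -Hy.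
have Kall : forall g, K g.
  move=> g; apply: contrapT => nKg.
  have [z [nK [k Hz]]] := dx _ (ex_intro _ g nKg) oKC.
  by apply: nK; rewrite Hz; apply: Kit.
move=> m Nm; rewrite /centre /= => g; symmetry; exact: Kall.
Qed.
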